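(* Let $k$ be a commutative ring and $R$ a commutative $k$-algebra with $k$-linear involution, such that $2$ is invertible in $R$ and $R$ is flat over $k$. Let $M$ be an involutive $R$-bimodule. Then \[\pi_0\big(\underline{B^k_*(R,R\otimes_kR,M)}^{\mathrm{fix}}(C_2/C_2)\big)\cong R\otimes_{R^{ie}}M.\]
   Context: An involutive $R$-bimodule is an $R$-bimodule $M$ with involution $m\mapsto\bar m$ such that $\overline{amb}=\bar b\bar m\bar a$. $B^k_*(R,R\otimes_kR,M)$ is the simplicial two-sided bar construction with $n$-simplices $R\otimes_k(R\otimes_kR)^{\otimes_kn}\otimes_kM$, where $R$ is a right $R\otimes_kR$-module via $a\cdot(x\otimes y)=yax$ and $M$ a left module via $(x\otimes y)m=xmy$; $C_2$ acts levelwise diagonally via the involution on $R$, $x\otimes y\mapsto\bar y\otimes\bar x$ on $R\otimes_kR$, and the involution on $M$. For a $k$-module $L$ with involution, $\underline L^{\mathrm{fix}}$ is the $C_2$-Mackey functor with value $L^{C_2}$ at $C_2/C_2$ and $L$ at $C_2/e$; so $\underline{B^k_*(\cdots)}^{\mathrm{fix}}(C_2/C_2)$ is the simplicial $k$-module of levelwise $C_2$-fixed points. $R^{ie}=R\otimes_kR^{\mathrm{op}}\otimes_kk[C_2]$ is the involutive enveloping algebra, with multiplication $(a\otimes b\otimes\tau^i)(c\otimes d\otimes\tau^j)=((a\otimes b)\cdot\tau^i(c\otimes d))\otimes\tau^{i+j}$, $\tau(c\otimes d)=\bar d\otimes\bar c$; involutive bimodules are $R^{ie}$-modules ($a\otimes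 b$ acts by $m\mapsto amb$, $\tau$ by the involution), and $R$ is one such. *)

(* Defs.v *)
From HB Require Import structures.
From mathcomp Require Import all_boot all_order all_algebra.
Set Implicit Arguments. Unset Strict Implicit. Unset Printing Implicit Defensive.
Import GRing.Theory.
Local Open Scope ring_scope.

Section Defs.
Variable k : comNzRingType.

Definition klinear (A B : lmodType k) (f : A -> B) : Prop :=
  forall (c : k) (x y : A), f (c *: x + y) = c *: f x + f y.

Definition kbilinear (A B W : lmodType k) (f : A -> B -> W) : Prop :=
  (forall b, klinear (fun a => f a b)) /\ (forall a, klinear (f a)).

Definition is_tensor (A B T : lmodType k) (t : A -> B -> T) : Prop :=
  kbilinear t /\
  forall (W : lmodType k) (f : A -> B -> W), kbilinear f ->
    (exists g : T -> W, klinear g /\ forall a b, g (t a b) = f a b) /\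
    (forall g1 g2 : T -> W, klinear g1 -> klinear g2 ->
       (forall a b, g1 (t a b) = g2 (t a b)) -> forall x, g1 x = g2 x).

Definition flat (R : lmodType k) : Prop :=
  forall (A B : lmodType k) (f : A -> B), klinear f -> injective f ->
  forall (TA TB : lmodType k) (ta : R -> A -> TA) (tb : R -> B -> TB),
    is_tensor ta -> is_tensor tb ->
    forall g : TA -> TB, klinear g -> (forall r a, g (ta r a) = tb r (f a)) ->
    injective g.

Definition is_alg_involution (R : comAlgType k) (conj : R -> R) : Prop :=
  [/\ klinear conj, (forall x y, conj (x * y) = conj y * conj x),
      conj 1 = 1 & (forall x, conj (conj x) = x)].

Definition is_bimodule (R : comAlgType k) (M : lmodType k)
    (lm : R -> M -> M) (rm : M -> R -> M) : Prop :=
  (forall a m n, lm a (m + n) = lm a m + lm a n) /\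
  (forall a b m, lm (a + b) m = lm a m + lm b m) /\
  (forall a b m, lm (a * b) m = lm a (lm b m)) /\
  (forall m, lm 1 m = m) /\
  (forall a m n, rm (m + n) a = rm m a + rm n a) /\
  (forall a b m, rm m (a + b) = rm m a + rm m b) /\
  (forall a b m, rm m (a * b) = rm (rm m a) b) /\
  (forall m, rm m 1 = m) /\
  (forall a b m, lm a (rm m b) = rm (lm a m) b) /\
  (forall (c : k) m, lm (c%:A) m = c *: m) /\
  (forall (c : k) m, rm m (c%:A) = c *: m).

Definition is_involutive_bimodule (R : comAlgType k) (conj : R -> R)
    (M : lmodType k) (lm : R -> M -> M) (rm : M -> R -> M) (invM : M -> M) : Prop :=
  [/\ is_bimodule lm rm,
      (forall m n, invM (m + n) = invM m + invM n),
      (forall m, invM (invM m) = m) &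
      (forall a b m, invM (lm a (rm m b)) = lm (conj b) (rm (invM m) (conj a)))].

(* Right action of the pure tensor  a (x) b (x) tau^i  of R^{ie} on R:
   r.(a (x) b) = b r a  (the given right R (x)_k R-module structure),
   r.tau = conj r. *)
Definition ie_ract (R : comAlgType k) (conj : R -> R)
    (r a b : R) (i : bool) : R :=
  if i then conj (b * r * a) else b * r * a.

(* Left action of  a (x) b (x) tau^i  on an involutive bimodule:
   (a (x) b (x) tau^i) m = a (tau^i m) b. *)
Definition ie_lact (R : comAlgType k) (M : lmodType k)
    (lm : R -> M -> M) (rm : M -> R -> M) (invM : M -> M)
    (a b : R) (i : bool) (m : M) : M :=
  lm a (rm (if i then invM m else m) b).

(* R^{ie}-balanced k-bilinear maps R x M -> W (balancedness on the pure
   tensors a (x) b (x) tau^i, which span R^{ie} over k) *)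
Definition ie_balanced (R : comAlgType k) (conj : R -> R)
    (M : lmodType k) (lm : R -> M -> M) (rm : M -> R -> M) (invM : M -> M)
    (W : lmodType k) (f : R -> M -> W) : Prop :=
  kbilinear f /\
  forall r a b i m, f (ie_ract conj r a b i) m = f r (ie_lact lm rm invM a b i m).

Definition is_tensor_ie (R : comAlgType k) (conj : R -> R)
    (M : lmodType k) (lm : R -> M -> M) (rm : M -> R -> M) (invM : M -> M)
    (Q : lmodType k) (q : R -> M -> Q) : Prop :=
  ie_balanced conj lm rm invM q /\
  forall (W : lmodType k) (f : R -> M -> W), ie_balanced conj lm rm invM f ->
    (exists g : Q -> W, klinear g /\ forall r m, g (q r m) = f r m) /\
    (forall g1 g2 : Q -> W, klinear g1 -> klinear g2 ->
       (forall r m, g1 (q r m) = g2 (q r m)) -> forall x, g1 x = g2 x).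

End Defs.

(* Main.v *)
Require Import Defs.
From HB Require Import structures.
From mathcomp Require Import all_boot all_order all_algebra.
From Stdlib Require Import ClassicalEpsilon.
Set Implicit Arguments. Unset Strict Implicit. Unset Printing Implicit Defensive.
Import GRing.Theory.
Local Open Scope ring_scope.

Section Gen.
Variable k : comNzRingType.

Lemma klinD (A B : lmodType k) (f : A -> B) : klinear f -> forall x y, f (x + y) = f x + f y.
Proof. by move=> h x y; have := h 1 x y; rewrite !scale1r. Qed.
Lemma klin0 (A B : lmodType k) (f : A -> B) : klinear f -> f 0 = 0.
Proof. move=> h; have e := klinD h 0 0; rewrite addr0 in e; apply: (addrI (f 0)); by rewrite addr0 -e. Qed.
Lemma klinZ (A B : lmodType k) (f : A -> B) : klinear f -> forall c x, f (c *: x) = c *: f x.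
Proof. by move=> h c x; have := h c x 0; rewrite addr0 (klin0 h) addr0. Qed.
Lemma klinN (A B : lmodType k) (f : A -> B) : klinear f -> forall x, f (- x) = - f x.
Proof. by move=> h x; rewrite -scaleN1r (klinZ h) scaleN1r. Qed.
Lemma klinB (A B : lmodType k) (f : A -> B) : klinear f -> forall x y, f (x - y) = f x - f y.
Proof. by move=> h x y; rewrite (klinD h) (klinN h). Qed.
Lemma mk_klin (A B : lmodType k) (f : A -> B) :
  (forall x y, f (x + y) = f x + f y) -> (forall c x, f (c *: x) = c *: f x) -> klinear f.
Proof. by move=> hD hZ c x y; rewrite hD hZ. Qed.
Lemma klin_comp (A B C : lmodType k) (f : B -> C) (g : A -> B) :
  klinear f -> klinear g -> klinear (fun x => f (g x)).
Proof. by move=> hf hg c x y; rewrite hg hf. Qed.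
Lemma klin_add (A B : lmodType k) (f g : A -> B) :
  klinear f -> klinear g -> klinear (fun x => f x + g x).
Proof. by move=> hf hg c x y; rewrite hf hg scalerDr addrACA. Qed.
Lemma klin_id (A : lmodType k) : klinear (fun x : A => x).
Proof. by []. Qed.

Lemma tens_ex (A B T : lmodType k) (t : A -> B -> T) : is_tensor t ->
  forall (W : lmodType k) (f : A -> B -> W), kbilinear f ->
  exists g : T -> W, klinear g /\ forall a b, g (t a b) = f a b.
Proof. by case=> _ h W f hf; case: (h W f hf). Qed.
Lemma tens_uniq (A B T : lmodType k) (t : A -> B -> T) : is_tensor t ->
  forall (W : lmodType k) (g1 g2 : T -> W), klinear g1 -> klinear g2 ->
  (forall a b, g1 (t a b) = g2 (t a b)) -> forall x, g1 x = g2 x.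
Proof.
case=> hb h W g1 g2 h1 h2 e.
have hf : kbilinear (fun a b => g1 (t a b)).
  by split=> ? ; apply: klin_comp => //; [apply: hb.1 | apply: hb.2].
by case: (h W _ hf) => _ /(_ g1 g2 h1 h2 e).
Qed.
Lemma bil1 (A B T : lmodType k) (t : A -> B -> T) : kbilinear t -> forall b, klinear (fun a => t a b).
Proof. by case. Qed.
Lemma bil2 (A B T : lmodType k) (t : A -> B -> T) : kbilinear t -> forall a, klinear (t a).
Proof. by case. Qed.
Lemma tens_bil (A B T : lmodType k) (t : A -> B -> T) : is_tensor t -> kbilinear t.
Proof. by case. Qed.
Lemma bil_comp (A B T W : lmodType k) (t : A -> B -> T) (g : T -> W) :
  kbilinear t -> klinear g -> kbilinear (fun a b => g (t a b)).
Proof. by move=> [h1 h2] hg; split=> ?; apply: klin_comp. Qed.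
End Gen.
Local Open Scope quotient_scope.
Local Open Scope quotient_scope.

Definition pb (P : Prop) : bool := if excluded_middle_informative P then true else false.
Lemma pbP (P : Prop) : reflect P (pb P).
Proof. rewrite /pb; case: excluded_middle_informative => h; constructor; done. Qed.

Section Quot.
Variables (k : comNzRingType) (V : lmodType k) (P : V -> Prop).
Hypothesis P0 : P 0.
Hypothesis PL : forall c x y, P x -> P y -> P (c *: x + y).

Lemma PN x : P x -> P (- x).
Proof. move=> h; have := PL (-1) h P0; by rewrite addr0 scaleN1r. Qed.
Lemma PD x y : P x -> P y -> P (x + y).
Proof. move=> h1 h2; have := PL 1 h1 h2; by rewrite scale1r. Qed.
Lemma PZ c x : P x -> P (c *: x).
Proof. move=> h; have := PL c h P0; by rewrite addr0. Qed.

Definition qrel (x y : V) := pb (P (x - y)).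
Lemma qrel_refl : reflexive qrel.
Proof. by move=> x; apply/pbP; rewrite subrr. Qed.
Lemma qrel_sym : symmetric qrel.
Proof.
move=> x y; apply/pbP/pbP => /PN; by rewrite opprB.
Qed.
Lemma qrel_trans : transitive qrel.
Proof.
move=> y x z /pbP h1 /pbP h2; apply/pbP.
have := PD h1 h2; by rewrite addrA subrK.
Qed.
Canonical qrel_equiv := EquivRel qrel qrel_refl qrel_sym qrel_trans.

Definition QT := {eq_quot qrel}.
HB.instance Definition _ := Choice.on QT.

Lemma piP x y : (\pi_QT x = \pi_QT y) <-> P (x - y).
Proof. split. by move/eqquotP/pbP. by move=> h; apply/eqquotP/pbP. Qed.

Definition qadd (a b : QT) : QT := \pi_QT (repr a + repr b).
Definition qopp (a : QT) : QT := \pi_QT (- repr a).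
Definition qzero : QT := \pi_QT 0.
Definition qscale (c : k) (a : QT) : QT := \pi_QT (c *: repr a).

Lemma reprP x : P (repr (\pi_QT x) - x).
Proof. by apply/piP; rewrite reprK. Qed.

Lemma qaddE x y : qadd (\pi x) (\pi y) = \pi_QT (x + y).
Proof.
apply/piP; have := PD (reprP x) (reprP y).
by rewrite addrACA opprD.
Qed.
Lemma qoppE x : qopp (\pi x) = \pi_QT (- x).
Proof. apply/piP; have := PN (reprP x); by rewrite opprB opprK addrC. Qed.
Lemma qscaleE c x : qscale c (\pi x) = \pi_QT (c *: x).
Proof. apply/piP; have := PZ c (reprP x); by rewrite scalerBr. Qed.

Lemma qaddA : associative qadd.
Proof. by elim/quotW=> x; elim/quotW=> y; elim/quotW=> z; rewrite !qaddE addrA. Qed.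
Lemma qaddC : commutative qadd.
Proof. by elim/quotW=> x; elim/quotW=> y; rewrite !qaddE addrC. Qed.
Lemma qadd0 : left_id qzero qadd.
Proof. by elim/quotW=> x; rewrite qaddE add0r. Qed.
Lemma qaddN : left_inverse qzero qopp qadd.
Proof. by elim/quotW=> x; rewrite qoppE qaddE addNr. Qed.

HB.instance Definition _ := GRing.isZmodule.Build QT qaddA qaddC qadd0 qaddN.

Lemma qscaleA a b v : qscale a (qscale b v) = qscale (a * b) v.
Proof. by elim/quotW: v => x; rewrite !qscaleE scalerA. Qed.
Lemma qscale1 : left_id 1 qscale.
Proof. by elim/quotW=> x; rewrite qscaleE scale1r. Qed.
Lemma qscaleDr : right_distributive qscale qadd.
Proof. by move=> c; elim/quotW=> x; elim/quotW=> y; rewrite !(qaddE, qscaleE) scalerDr. Qed.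
Lemma qscaleDl v : {morph qscale^~ v : a b / a + b >-> qadd a b}.
Proof. by elim/quotW: v => x a b; rewrite !(qaddE, qscaleE) scalerDl. Qed.

HB.instance Definition _ := GRing.Zmodule_isLmodule.Build k QT qscaleA qscale1 qscaleDr qscaleDl.

Definition qpi (x : V) : QT := \pi_QT x.
Lemma qpi_lin c x y : qpi (c *: x + y) = c *: qpi x + qpi y.
Proof. by rewrite /qpi -qaddE -qscaleE. Qed.
Lemma qpi0 x : qpi x = 0 <-> P x.
Proof. rewrite /qpi. have -> : (0 : QT) = \pi_QT 0 by []. rewrite piP subr0. done. Qed.
Lemma qpi_surj (a : QT) : exists x, qpi x = a.
Proof. exists (repr a); exact: reprK. Qed.
Lemma qpi_klin : klinear qpi.
Proof. move=> c x y; exact: qpi_lin. Qed.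
Lemma qlift (W : lmodType k) (g : V -> W) : klinear g -> (forall x, P x -> g x = 0) ->
  exists gb : QT -> W, klinear gb /\ forall x, gb (qpi x) = g x.
Proof.
move=> hg h0.
have E x : g (repr (\pi_QT x)) = g x.
  apply/eqP; rewrite -subr_eq0 -(klinB hg) h0 //; exact: reprP.
exists (fun a => g (repr a)); split; last exact: E.
move=> c; elim/quotW=> x; elim/quotW=> y.
have := qpi_lin c x y; rewrite /qpi => <-.
by rewrite !E hg.
Qed.
End Quot.

Section Main.
Variables (k : comNzRingType) (R : comAlgType k) (conj : R -> R)
  (M : lmodType k) (lm : R -> M -> M) (rm : M -> R -> M) (invM : M -> M).
Hypothesis Hconj : is_alg_involution conj.
Variable h : R.
Hypothesis Hh : 2%:R * h = 1.
Hypothesis HM : is_involutive_bimodule conj lm rm invM.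
Variables (X0 : lmodType k) (t0 : R -> M -> X0).
Hypothesis Ht0 : is_tensor t0.
Variables (S : lmodType k) (s : R -> R -> S).
Hypothesis Hs : is_tensor s.
Variables (U : lmodType k) (u : S -> M -> U).
Hypothesis Hu : is_tensor u.
Variables (X1 : lmodType k) (t1 : R -> U -> X1).
Hypothesis Ht1 : is_tensor t1.
Variables (d0 d1 : X1 -> X0).
Hypotheses (Hd0 : klinear d0) (Hd1 : klinear d1).
Hypothesis Hd0t : forall r x y m, d0 (t1 r (u (s x y) m)) = t0 (y * r * x) m.
Hypothesis Hd1t : forall r x y m, d1 (t1 r (u (s x y) m)) = t0 r (lm x (rm m y)).
Variables (tau0 : X0 -> X0) (tau1 : X1 -> X1).
Hypotheses (Htau0 : klinear tau0) (Htau1 : klinear tau1).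
Hypothesis Htau0t : forall r m, tau0 (t0 r m) = t0 (conj r) (invM m).
Hypothesis Htau1t : forall r x y m,
      tau1 (t1 r (u (s x y) m)) = t1 (conj r) (u (s (conj y) (conj x)) (invM m)).
Variables (Q : lmodType k) (q : R -> M -> Q).
Hypothesis Hq : is_tensor_ie conj lm rm invM q.

Lemma main_sec : exists phi : X0 -> Q,
    [/\ (forall (c : k) x y, tau0 x = x -> tau0 y = y ->
           phi (c *: x + y) = c *: phi x + phi y),
        (forall z : Q, exists x, tau0 x = x /\ phi x = z) &
        (forall x, tau0 x = x ->
           (phi x = 0 <-> exists y, tau1 y = y /\ x = d0 y - d1 y))].
Proof.
have [Hqb Hqu] := Hq.
have [qbil qbal] := Hqb.
have [cL cM c1 cc] := Hconj.
case: HM => Hbim invD invinv invact.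
have [_ [_ [_ [lm1 [_ [_ [_ [rm1 _]]]]]]]] := Hbim.
have cD := klinD cL.
have c2 : conj 2%:R = 2%:R by rewrite mulr2n cD c1.
have ech : conj h * 2%:R = 1 by rewrite -{1}c2 -cM Hh c1.
have ch : conj h = h by rewrite -[conj h]mulr1 -Hh mulrA ech mul1r.
have hh : forall r, h * r + h * r = r.
  by move=> r; rewrite -mulrDl -mulr2n -mulr_natl Hh mul1r.
have t0b := tens_bil Ht0.
have t0D1 : forall r r' m, t0 (r + r') m = t0 r m + t0 r' m.
  by move=> r r' m; apply: (klinD (bil1 t0b m)).
have t1b := tens_bil Ht1.
have ub := tens_bil Hu.
have U1 : forall (W : lmodType k) (g1 g2 : X1 -> W), klinear g1 -> klinear g2 ->
   (forall r x y m, g1 (t1 r (u (s x y) m)) = g2 (t1 r (u (s x y) m))) -> forall z, g1 z = g2 z.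
  move=> W g1 g2 h1 h2 e; apply: (tens_uniq Ht1) => // r w.
  apply: (tens_uniq Hu (g1 := fun w => g1 (t1 r w)) (g2 := fun w => g2 (t1 r w))).
  - exact: klin_comp h1 (bil2 t1b r).
  - exact: klin_comp h2 (bil2 t1b r).
  move=> sg m.
  apply: (tens_uniq Hs (g1 := fun sg => g1 (t1 r (u sg m))) (g2 := fun sg => g2 (t1 r (u sg m)))).
  - exact: klin_comp h1 (klin_comp (bil2 t1b r) (bil1 ub m)).
  - exact: klin_comp h2 (klin_comp (bil2 t1b r) (bil1 ub m)).
  by move=> x y; apply: e.
have [phi [phiL phit]] := tens_ex Ht0 qbil.
have Lbil : kbilinear (fun r m => t0 (h * r) m).
  split=> [m|r]; last exact: (bil2 t0b).
  move=> c x y; rewrite mulrDr -scalerAr; exact: (bil1 t0b m c (h * x) (h * y)).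
have [Lh [LhL Lht]] := tens_ex Ht0 Lbil.
have tt0 : forall x, tau0 (tau0 x) = x.
  apply: (tens_uniq Ht0 (g1 := fun x => tau0 (tau0 x)) (g2 := fun x => x)).
  - exact: (klin_comp Htau0 Htau0).
  - exact: klin_id.
  by move=> r m; rewrite !Htau0t cc invinv.
have tL : forall x, tau0 (Lh x) = Lh (tau0 x).
  apply: (tens_uniq Ht0 (g1 := fun x => tau0 (Lh x)) (g2 := fun x => Lh (tau0 x))).
  - exact: klin_comp Htau0 LhL.
  - exact: klin_comp LhL Htau0.
  by move=> r m; rewrite Lht !Htau0t Lht cM ch mulrC.
have LL : forall x, Lh x + Lh x = x.
  apply: (tens_uniq Ht0 (g1 := fun x => Lh x + Lh x) (g2 := fun x => x)).
  - exact: (klin_add LhL LhL).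
  - exact: klin_id.
  by move=> r m; rewrite Lht -t0D1 hh.
pose avg x := Lh x + Lh (tau0 x).
have avgL : klinear avg := klin_add LhL (klin_comp LhL Htau0).
have avgfix : forall x, tau0 (avg x) = avg x.
  by move=> x; rewrite /avg (klinD Htau0) !tL tt0 addrC.
have avgid : forall x, tau0 x = x -> avg x = x.
  by move=> x e; rewrite /avg e LL.
have avgt : forall x, avg (tau0 x) = avg x.
  by move=> x; rewrite /avg tt0 addrC.
have qsym : forall r m, q (conj r) (invM m) = q r m.
  move=> r m; have := qbal r 1 1 true (invM m).
  by rewrite /ie_ract /ie_lact /= mul1r mulr1 lm1 rm1 invinv.
have phiavg : forall x, phi (avg x) = phi x.
  apply: (tens_uniq Ht0 (g1 := fun x => phi (avg x)) (g2 := phi)).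
  - exact: klin_comp phiL avgL.
  - exact: phiL.
  move=> r m; rewrite /avg Htau0t !Lht (klinD phiL) !phit.
  have -> : h * conj r = conj (h * r) by rewrite cM ch mulrC.
  by rewrite qsym -(klinD (bil1 qbil m)) hh.
have tt1 : forall y, tau1 (tau1 y) = y.
  apply: (U1 _ (fun y => tau1 (tau1 y)) (fun y => y)).
  - exact: (klin_comp Htau1 Htau1).
  - exact: klin_id.
  by move=> r x y m; rewrite !Htau1t !cc invinv.
have ed0 : forall y, tau0 (d0 y) = d0 (tau1 y).
  apply: (U1 _ (fun y => tau0 (d0 y)) (fun y => d0 (tau1 y))).
  - exact: klin_comp Htau0 Hd0.
  - exact: klin_comp Hd0 Htau1.
  by move=> r x y m; rewrite Htau1t !Hd0t Htau0t !cM mulrA.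
have ed1 : forall y, tau0 (d1 y) = d1 (tau1 y).
  apply: (U1 _ (fun y => tau0 (d1 y)) (fun y => d1 (tau1 y))).
  - exact: klin_comp Htau0 Hd1.
  - exact: klin_comp Hd1 Htau1.
  by move=> r x y m; rewrite Htau1t !Hd1t Htau0t invact.
have phid : forall y, phi (d0 y) = phi (d1 y).
  apply: (U1 _ (fun y => phi (d0 y)) (fun y => phi (d1 y))).
  - exact: klin_comp phiL Hd0.
  - exact: klin_comp phiL Hd1.
  by move=> r x y m; rewrite Hd0t Hd1t !phit; apply: (qbal r x y false m).
pose Dp := fun x : X0 => exists y, tau1 y = y /\ x = d0 y - d1 y.
have D0 : Dp 0.
  by exists 0; rewrite (klin0 Htau1) (klin0 Hd0) (klin0 Hd1) subrr.
have DL : forall c x y, Dp x -> Dp y -> Dp (c *: x + y).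
  move=> c x y [y1 [e1 ->]] [y2 [e2 ->]]; exists (c *: y1 + y2); split.
    by rewrite Htau1 e1 e2.
  by rewrite Hd0 Hd1 scalerBr opprD [RHS]addrACA.
pose cls := qpi D0 DL.
have clsL : klinear cls := qpi_klin D0 DL.
have clsE : forall x y, cls x = cls y <-> Dp (x - y) := piP D0 DL.
pose f := fun r m => cls (avg (t0 r m)).
have fbil : kbilinear f := bil_comp t0b (klin_comp clsL avgL).
have fsym : forall r m, f (conj r) m = f r (invM m).
  by move=> r m; rewrite /f -{1}(invinv m) -Htau0t avgt.
have fbal0 : forall r a b m, f (b * r * a) m = f r (lm a (rm m b)).
  move=> r a b m; apply/clsE.
  pose z := t1 (h * r) (u (s a b) m).
  exists (z + tau1 z); split; first by rewrite (klinD Htau1) tt1 addrC.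
  rewrite (klinD Hd0) (klinD Hd1) -ed0 -ed1 /z Hd0t Hd1t !Htau0t /avg !Htau0t !Lht.
  have e1 : b * (h * r) * a = h * (b * r * a) by rewrite !mulrA (mulrC b h).
  have e2 : conj (b * (h * r) * a) = h * conj (b * r * a) by rewrite e1 cM ch mulrC.
  have e3 : conj (h * r) = h * conj r by rewrite cM ch mulrC.
  by rewrite e2 e1 e3 opprD.
have fbal : ie_balanced conj lm rm invM f.
  split=> // r a b [] m; rewrite /ie_ract /ie_lact.
    by rewrite fsym fbal0.
  exact: fbal0.
have [[psi [psiL psit]] _] := Hqu _ f fbal.
have phiD : forall x, Dp x -> phi x = 0.
  by move=> x [y [_ ->]]; rewrite (klinB phiL) phid subrr.
have [phib [phibL phibt]] := qlift D0 DL phiL phiD.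
have phibpsi : forall z, phib (psi z) = z.
  move=> z; apply: ((Hqu _ q Hqb).2 (fun z => phib (psi z)) (fun z => z)).
  - exact: (klin_comp phibL psiL).
  - exact: klin_id.
  by move=> r m; rewrite psit /f /cls phibt phiavg phit.
have psiphi : forall x, psi (phi x) = cls (avg x).
  apply: (tens_uniq Ht0 (g1 := fun x => psi (phi x)) (g2 := fun x => cls (avg x))).
  - exact: (klin_comp psiL phiL).
  - exact: (klin_comp clsL avgL).
  by move=> r m; rewrite phit psit.
exists phi; split.
- by move=> c x y _ _; apply: phiL.
- move=> z; have [x ex] := qpi_surj (psi z).
  exists (avg x); split; first exact: avgfix.
  by rewrite phiavg -phibt ex phibpsi.
- move=> x fx; split.
  + move=> e; have : cls x = cls 0.
      by rewrite -{1}(avgid x fx) -psiphi e !(klin0 psiL) (klin0 clsL).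
    by move/clsE; rewrite subr0.
  + by move=> [y [_ ->]]; rewrite (klinB phiL) phid subrr.
Qed.
End Main.

Theorem mainTheorem12
  (k : comNzRingType) (R : comAlgType k) (conj : R -> R)
  (M : lmodType k) (lm : R -> M -> M) (rm : M -> R -> M) (invM : M -> M)
  (Hconj : is_alg_involution conj)
  (H2 : exists h : R, 2%:R * h = 1)
  (Hflat : flat R)
  (HM : is_involutive_bimodule conj lm rm invM)
  (* level 0 of the bar construction:  X0 = R (x)_k M *)
  (X0 : lmodType k) (t0 : R -> M -> X0) (Ht0 : is_tensor t0)
  (* level 1:  X1 = R (x)_k ((R (x)_k R) (x)_k M) *)
  (S : lmodType k) (s : R -> R -> S) (Hs : is_tensor s)
  (U : lmodType k) (u : S -> M -> U) (Hu : is_tensor u)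
  (X1 : lmodType k) (t1 : R -> U -> X1) (Ht1 : is_tensor t1)
  (* face maps d0, d1 : X1 -> X0 *)
  (d0 d1 : X1 -> X0) (Hd0 : klinear d0) (Hd1 : klinear d1)
  (Hd0t : forall r x y m, d0 (t1 r (u (s x y) m)) = t0 (y * r * x) m)
  (Hd1t : forall r x y m, d1 (t1 r (u (s x y) m)) = t0 r (lm x (rm m y)))
  (* the levelwise diagonal C2-actions *)
  (tau0 : X0 -> X0) (tau1 : X1 -> X1) (Htau0 : klinear tau0) (Htau1 : klinear tau1)
  (Htau0t : forall r m, tau0 (t0 r m) = t0 (conj r) (invM m))
  (Htau1t : forall r x y m,
      tau1 (t1 r (u (s x y) m)) = t1 (conj r) (u (s (conj y) (conj x)) (invM m)))
  (* the target  R (x)_{R^{ie}} M *)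
  (Q : lmodType k) (q : R -> M -> Q) (Hq : is_tensor_ie conj lm rm invM q) :
  (* pi_0 of the levelwise fixed points, coker(d0 - d1 : X1^C2 -> X0^C2),
     is isomorphic to Q: there is a k-linear map X0^C2 -> Q which is
     surjective with kernel exactly the image of (d0 - d1) on X1^C2 *)
  exists phi : X0 -> Q,
    [/\ (forall (c : k) x y, tau0 x = x -> tau0 y = y ->
           phi (c *: x + y) = c *: phi x + phi y),
        (forall z : Q, exists x, tau0 x = x /\ phi x = z) &
        (forall x, tau0 x = x ->
           (phi x = 0 <-> exists y, tau1 y = y /\ x = d0 y - d1 y))].
Proof.
have [h Hh] := H2.
exact: (main_sec Hconj Hh HM Ht0 Hs Hu Ht1 Hd0 Hd1 Hd0t Hd1t Htau0 Htau1 Htau0t Htau1t Hq).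
Qed.
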